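(* Let $N,\mu,\beta,\sigma,\gamma,p>0$ and $0<\rho<1$ and consider $$\begin{aligned}S'&=\mu N-\tfrac{\beta}{N}S(1-\rho)I-\tfrac{p}{N}S-\mu S, & E'&=\tfrac{\beta}{N}S(1-\rho)I-(\sigma+\mu) E, & I'&=\sigma E-(\gamma+\mu) I,\\ R'&=\gamma I-\mu R, & V'&=\tfrac{p}{N}S-\mu V.\end{aligned}$$ Let $\Sigma=\{(S,E,I,R,V)\in\mathbb{R}_+^5:S+E+I+R+V=N\}$, $\Omega=\{(S,E,I)\in\mathbb{R}_+^3:S+E+I\le N\}$ and $\mathcal{R}_0=\dfrac{\mu N\sigma\beta(1-\rho)}{(\sigma+\mu)(\gamma+\mu)(p+\mu N)}$. If $\mathcal{R}_0>1$ and the initial condition $(S_0,E_0,I_0,R(0),V_0)\in\Sigma$ satisfies $(S_0,E_0,I_0)\in\operatorname{int}\Omega$, then the solution converges as $t\to+\infty$ to the endemic equilibrium $P^e=(S^e,E^e,I^e,R^e,V^e)$, where $$S^e=\frac{(\sigma+\mu)(\gamma+\mu)N}{\sigma\beta(1-\rho)},\quad I^e=\frac{\mu N\sigma\beta(1-\rho)-(\sigma+\mu)(\gamma+\mu)(p+\mu N)}{(\sigma+\mu)(\gamma+\mu)\beta(1-\rho)},$$ $$E^e=\frac{\gamma+\mu}{\sigma}I^e,\quad R^e=\frac{\gamma}{\mu}I^e,\quad V^e=\frac{p}{\mu N}S^e.$$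
   Context: SEIR model with vaccination at constant effective rate $p$ and equal birth/death rate $\mu$; $\mathcal{R}_0$ is the reproductive number. *)

(* Defs.v *)
From Stdlib Require Import Reals.
From Coquelicot Require Import Coquelicot.
Open Scope R_scope.

Definition repro_number (N mu beta sigma gamma p rho : R) : R :=
  (mu * N * sigma * beta * (1 - rho)) /
  ((sigma + mu) * (gamma + mu) * (p + mu * N)).

Definition Se (N mu beta sigma gamma rho : R) : R :=
  (sigma + mu) * (gamma + mu) * N / (sigma * beta * (1 - rho)).
Definition Ie (N mu beta sigma gamma p rho : R) : R :=
  (mu * N * sigma * beta * (1 - rho) - (sigma + mu) * (gamma + mu) * (p + mu * N)) /
  ((sigma + mu) * (gamma + mu) * beta * (1 - rho)).
Definition Ee (N mu beta sigma gamma p rho : R) : R :=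
  (gamma + mu) / sigma * Ie N mu beta sigma gamma p rho.
Definition Req (N mu beta sigma gamma p rho : R) : R :=
  gamma / mu * Ie N mu beta sigma gamma p rho.
Definition Ve (N mu beta sigma gamma p rho : R) : R :=
  p / (mu * N) * Se N mu beta sigma gamma rho.

Definition is_solution (N mu beta sigma gamma p rho : R)
  (S E I Rr V : R -> R) : Prop :=
  (forall t, 0 < t ->
     is_derive S t (mu * N - beta / N * S t * (1 - rho) * I t - p / N * S t - mu * S t) /\
     is_derive E t (beta / N * S t * (1 - rho) * I t - (sigma + mu) * E t) /\
     is_derive I t (sigma * E t - (gamma + mu) * I t) /\
     is_derive Rr t (gamma * I t - mu * Rr t) /\
     is_derive V t (p / N * S t - mu * V t)) /\
  filterlim S (at_right 0) (locally (S 0)) /\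
  filterlim E (at_right 0) (locally (E 0)) /\
  filterlim I (at_right 0) (locally (I 0)) /\
  filterlim Rr (at_right 0) (locally (Rr 0)) /\
  filterlim V (at_right 0) (locally (V 0)).

Definition in_Sigma (N s e i r v : R) : Prop :=
  0 <= s /\ 0 <= e /\ 0 <= i /\ 0 <= r /\ 0 <= v /\ s + e + i + r + v = N.

Definition in_int_Omega (N s e i : R) : Prop :=
  0 < s /\ 0 < e /\ 0 < i /\ s + e + i < N.

(* Main.v *)
Require Import Defs.
From Stdlib Require Import Reals Lra Psatz Classical.
From Coquelicot Require Import Coquelicot.
Open Scope R_scope.
Lemma cont_eps (f : R -> R) x l : is_derive f x l ->
  forall eps, 0 < eps -> exists d, 0 < d /\ forall y, Rabs (y - x) < d -> Rabs (f y - f x) < eps.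
Proof.
intros H eps He.
assert (Hc : continuity_pt f x).
{ apply continuity_pt_filterlim. apply (ex_derive_continuous f x). exists l; auto. }
destruct (Hc eps He) as [d [Hd Hy]]. exists d; split; auto.
intros y Hyd. destruct (Req_dec y x) as [->|Hne].
- rewrite Rminus_eq_0, Rabs_R0; auto.
- apply (Hy y). split; [split; [exact I | auto] | exact Hyd].
Qed.
Lemma deriv_eps (f : R -> R) x l : is_derive f x l ->
  forall eps, 0 < eps -> exists d, 0 < d /\ forall h, h <> 0 -> Rabs h < d -> Rabs ((f (x+h) - f x)/h - l) < eps.
Proof.
intros H eps He. apply is_derive_Reals in H.
destruct (H eps He) as [d Hd]. exists d. split; [apply cond_pos|]. intros; apply Hd; auto.
Qed.
Lemma mvt_int (f df : R -> R) T0 T1 a b : T0 < a -> a < b -> b < T1 ->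
  (forall t, T0 < t < T1 -> is_derive f t (df t)) ->
  exists c, a <= c <= b /\ f b - f a = df c * (b - a).
Proof.
intros Ha Hab Hb Hd.
destruct (MVT_gen f a b df) as [c [Hc Heq]].
- intros x Hx. rewrite Rmin_left, Rmax_right in Hx by lra. apply Hd; lra.
- intros x Hx. rewrite Rmin_left, Rmax_right in Hx by lra.
  apply continuity_pt_filterlim. apply (ex_derive_continuous f x). exists (df x); apply Hd; lra.
- rewrite Rmin_left, Rmax_right in Hc by lra. exists c; split; auto.
Qed.
Lemma nonincr (f df : R -> R) T0 T1 :
  (forall t, T0 < t < T1 -> is_derive f t (df t)) ->
  (forall t, T0 < t < T1 -> df t <= 0) ->
  forall s t, T0 < s -> s <= t -> t < T1 -> f t <= f s.
Proof.
intros Hd Hn s t Hs Hst Ht. destruct (Req_dec s t) as [->|Hne]; [lra|].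
destruct (mvt_int f df T0 T1 s t) as [c [Hc Heq]]; try lra; auto.
assert (df c <= 0) by (apply Hn; lra). nra.
Qed.
Lemma lipsch (g dg : R -> R) T0 K :
  (forall t, T0 < t -> is_derive g t (dg t)) ->
  (forall t, T0 < t -> Rabs (dg t) <= K) ->
  forall s t, T0 < s -> s <= t -> Rabs (g t - g s) <= K * (t - s).
Proof.
intros Hd Hb s t Hs Hst. destruct (Req_dec s t) as [->|Hne].
{ rewrite Rminus_eq_0, Rabs_R0. lra. }
destruct (mvt_int g dg T0 (t+1) s t) as [c [Hc Heq]]; try lra.
{ intros; apply Hd; lra. }
rewrite Heq, Rabs_mult, (Rabs_right (t - s)) by lra.
apply Rmult_le_compat_r; [lra|]. apply Hb; lra.
Qed.
Lemma nat_big (x : R) : exists n : nat, x < INR n.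
Proof.
destruct (nfloor_ex (Rmax 0 x) (Rmax_l 0 x)) as [n Hn]. exists (S n). rewrite S_INR.
pose proof (Rmax_r 0 x). lra.
Qed.

Lemma barbalat1 (Lf dL h dh : R -> R) T0 K B :
  (forall t, T0 < t -> is_derive Lf t (dL t)) ->
  (forall t, T0 < t -> dL t <= - h t) ->
  (forall t, T0 < t -> 0 <= h t) ->
  (forall t, T0 < t -> is_derive h t (dh t)) ->
  (forall t, T0 < t -> Rabs (dh t) <= K) ->
  (forall t, T0 < t -> B <= Lf t) ->
  forall eps, 0 < eps -> exists T, forall t, T < t -> h t < eps.
Proof.
intros HdL HL Hh Hdh HK HB eps He.
apply NNPP. intro Hn.
assert (Hinf : forall T, exists t, T < t /\ eps <= h t).
{ intro T. apply NNPP. intro H1. apply Hn. exists T. intros t Ht.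
  destruct (Rlt_le_dec (h t) eps); auto. exfalso. apply H1. exists t; auto. }
set (K' := Rabs K + 1).
assert (HK' : 0 < K') by (unfold K'; pose proof (Rabs_pos K); lra).
set (d := eps / (2 * K')).
assert (Hd : 0 < d) by (unfold d; apply Rdiv_lt_0_compat; lra).
assert (HKd : K' * d = eps / 2) by (unfold d; field; lra).
assert (Hmono : forall s t, T0 < s -> s <= t -> Lf t <= Lf s).
{ intros s t Hs Hst. apply (nonincr Lf dL T0 (t+1)); try lra.
  - intros; apply HdL; lra.
  - intros u Hu. pose proof (HL u ltac:(lra)). pose proof (Hh u ltac:(lra)). lra. }
assert (Hstep : forall t, T0 < t -> eps <= h t -> Lf (t + d) <= Lf t - eps / 2 * d).
{ intros t Ht Hht.
  destruct (mvt_int Lf dL T0 (t+d+1) t (t+d)) as [c [Hc Heq]]; try lra.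
  { intros; apply HdL; lra. }
  pose proof (lipsch h dh T0 K Hdh HK t c Ht ltac:(lra)) as Hl.
  assert (K * (c - t) <= K' * d).
  { unfold K'. assert (K <= Rabs K) by apply Rle_abs. assert (0 <= c - t) by lra.
    assert (0 <= (Rabs K - K)*(c-t)) by (apply Rmult_le_pos; lra).
    assert (0 <= (Rabs K + 1)*(d-(c-t))) by (apply Rmult_le_pos; pose proof (Rabs_pos K); lra). nra. }
  assert (h c >= eps/2) by (apply Rabs_le_between in Hl; lra).
  pose proof (HL c ltac:(lra)).
  replace (t + d - t) with d in Heq by ring. nra. }
assert (Hind : forall n : nat, exists t, T0 < t /\ Lf t <= Lf (T0+1) - INR n * (eps/2*d)).
{ induction n as [|n [t [Ht HLt]]].
  - exists (T0+1). simpl. split; lra.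
  - destruct (Hinf t) as [t' [Ht' Hht']].
    exists (t' + d). split; [lra|].
    pose proof (Hstep t' ltac:(lra) Hht').
    pose proof (Hmono t t' Ht ltac:(lra)).
    rewrite S_INR. lra. }
assert (Hc : 0 < eps / 2 * d) by (apply Rmult_lt_0_compat; lra).
destruct (nat_big ((Lf (T0+1) - B) / (eps/2*d))) as [n Hn'].
destruct (Hind n) as [t [Ht HLt]].
pose proof (HB t Ht).
assert ((Lf (T0+1) - B) < INR n * (eps/2*d)).
{ apply (Rmult_lt_compat_r (eps/2*d)) in Hn'; auto. unfold Rdiv in Hn'.
  rewrite Rmult_assoc, Rinv_l, Rmult_1_r in Hn' by lra. lra. }
lra.
Qed.

Lemma barbalat2 (x g dg : R -> R) T0 K c :
  (forall t, T0 < t -> is_derive x t (g t)) ->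
  (forall t, T0 < t -> is_derive g t (dg t)) ->
  (forall t, T0 < t -> Rabs (dg t) <= K) ->
  (forall eps, 0 < eps -> exists T, forall t, T < t -> Rabs (x t - c) < eps) ->
  forall eps, 0 < eps -> exists T, forall t, T < t -> Rabs (g t) < eps.
Proof.
intros Hx Hg HK Hc eps He.
set (K' := Rabs K + 1).
assert (HK' : 0 < K') by (unfold K'; pose proof (Rabs_pos K); lra).
set (d := eps / (2 * K')).
assert (Hd : 0 < d) by (unfold d; apply Rdiv_lt_0_compat; lra).
assert (HKd : K' * d = eps / 2) by (unfold d; field; lra).
destruct (Hc (eps * d / 4)) as [T1 HT1]; [nra|].
exists (Rmax T0 T1). intros t Ht.
pose proof (Rmax_l T0 T1). pose proof (Rmax_r T0 T1).
destruct (Rlt_le_dec (Rabs (g t)) eps) as [|Hge]; auto. exfalso.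
destruct (mvt_int x g T0 (t+d+1) t (t+d)) as [cc [Hcc Heq]]; try lra.
{ intros; apply Hx; lra. }
pose proof (lipsch g dg T0 K Hg HK t cc ltac:(lra) ltac:(lra)) as Hl.
assert (K * (cc - t) <= K' * d).
{ unfold K'. assert (K <= Rabs K) by apply Rle_abs. assert (0 <= cc - t) by lra.
  assert (0 <= (Rabs K - K)*(cc-t)) by (apply Rmult_le_pos; lra).
  assert (0 <= (Rabs K + 1)*(d-(cc-t))) by (apply Rmult_le_pos; pose proof (Rabs_pos K); lra). nra. }
assert (Rabs (g cc) >= eps/2).
{ pose proof (Rabs_triang_inv (g t) (g cc)). rewrite <- Rabs_Ropp in Hl.
  replace (- (g cc - g t)) with (g t - g cc) in Hl by ring. lra. }
pose proof (HT1 t ltac:(lra)). pose proof (HT1 (t+d) ltac:(lra)).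
replace (t + d - t) with d in Heq by ring.
assert (Hxx : Rabs (x (t+d) - x t) < eps * d / 2).
{ replace (x (t+d) - x t) with ((x (t+d) - c) - (x t - c)) by ring.
  pose proof (Rabs_triang (x (t+d) - c) (- (x t - c))) as Htr. rewrite Rabs_Ropp in Htr.
  replace ((x (t+d) - c) - (x t - c)) with ((x (t+d) - c) + - (x t - c)) by ring. lra. }
rewrite Heq, Rabs_mult, (Rabs_right d) in Hxx by lra.
nra.
Qed.

Lemma lin_upper (x f : R -> R) m l : 0 < m ->
  (forall t, 0 < t -> is_derive x t (f t - m * x t)) ->
  (forall eps, 0 < eps -> exists T, forall t, T < t -> Rabs (f t - l) < eps) ->
  forall eps, 0 < eps -> exists T, forall t, T < t -> x t < l / m + eps.
Proof.
intros Hm Hx Hf eps He.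
set (e := eps / 2).
destruct (Hf (m * e)) as [T1 HT1]; [unfold e; nra|].
pose proof (Rmax_l T1 0). pose proof (Rmax_r T1 0).
set (Tm := Rmax T1 0) in *.
set (z := fun t => (x t - l / m - e) * exp (m * t)).
set (dz := fun t => (f t - l - m * e) * exp (m * t)).
assert (Hdz : forall t, Tm < t < t + 2 -> is_derive z t (dz t)).
{ intros t Ht. unfold z, dz. pose proof (Hx t ltac:(lra)) as Hd.
  auto_derive. { exists (f t - m * x t); auto. }
  change (fun x0 => x x0) with x. rewrite (is_derive_unique _ _ _ Hd). field. lra. }
set (C := z (Tm + 1)).
exists (Rmax (Tm + 1) (Rabs C / (m * e))). intros t Ht.
pose proof (Rmax_l (Tm + 1) (Rabs C / (m * e))). pose proof (Rmax_r (Tm + 1) (Rabs C / (m * e))).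
assert (Hzt : z t <= C).
{ unfold C. apply (nonincr z dz Tm (t+1)); try lra.
  - intros u Hu. apply Hdz. lra.
  - intros u Hu. unfold dz. pose proof (HT1 u ltac:(lra)) as Hu1.
    apply Rabs_def2 in Hu1. pose proof (exp_pos (m*u)). nra. }
assert (Hex : 0 < exp (m * t)) by apply exp_pos.
assert (Hxt : x t - l / m - e = z t / exp (m * t)) by (unfold z; field; lra).
assert (z t / exp (m * t) < e).
{ destruct (Rle_lt_dec C 0).
  - assert (z t / exp (m*t) <= 0). { unfold Rdiv. assert (0 < / exp (m*t)) by (apply Rinv_0_lt_compat; auto). nra. }
    unfold e; lra.
  - assert (He0 : 0 < e) by (unfold e; lra).
    assert (Hbig : C / (m * e) < t) by (rewrite Rabs_right in * by lra; lra).
    pose proof (exp_ineq1_le (m * t)).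
    assert (C < m * e * t).
    { apply (Rmult_lt_compat_l (m*e)) in Hbig; [|nra]. field_simplify in Hbig; lra. }
    apply (Rmult_lt_reg_r (exp (m*t))); auto.
    unfold Rdiv. rewrite Rmult_assoc, Rinv_l, Rmult_1_r by lra. nra. }
unfold e in *. lra.
Qed.

Lemma lin_conv (x f : R -> R) m l : 0 < m ->
  (forall t, 0 < t -> is_derive x t (f t - m * x t)) ->
  (forall eps, 0 < eps -> exists T, forall t, T < t -> Rabs (f t - l) < eps) ->
  forall eps, 0 < eps -> exists T, forall t, T < t -> Rabs (x t - l / m) < eps.
Proof.
intros Hm Hx Hf eps He.
destruct (lin_upper x f m l Hm Hx Hf eps He) as [T1 H1].
destruct (lin_upper (fun t => - x t) (fun t => - f t) m (- l) Hm) with (eps := eps) as [T2 H2]; auto.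
- intros t Ht. pose proof (is_derive_opp _ _ _ (Hx t Ht)) as Hd. simpl in Hd.
  replace (- f t - m * - x t) with (- (f t - m * x t)) by ring. exact Hd.
- intros e0 He0. destruct (Hf e0 He0) as [T HT]. exists T. intros t Ht.
  replace (- f t - - l) with (- (f t - l)) by ring. rewrite Rabs_Ropp. auto.
- exists (Rmax T1 T2). intros t Ht. pose proof (Rmax_l T1 T2). pose proof (Rmax_r T1 T2).
  pose proof (H1 t ltac:(lra)). pose proof (H2 t ltac:(lra)).
  assert (- l / m = - (l / m)) by (field; lra).
  apply Rabs_def1; lra.
Qed.
Lemma rc_pos (f : R -> R) : filterlim f (at_right 0) (locally (f 0)) -> 0 < f 0 ->
  exists d, 0 < d /\ forall t, 0 < t < d -> 0 < f t.
Proof.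
intros Hf H0.
assert (Hb := proj1 (filterlim_locally f (f 0)) Hf (mkposreal _ H0)).
destruct Hb as [d Hd]. exists d. split; [apply cond_pos|].
intros t Ht. assert (Hball : ball 0 d t).
{ unfold ball; simpl; unfold AbsRing_ball, abs, minus, plus, opp; simpl.
  rewrite Ropp_0, Rplus_0_r, Rabs_right by lra. lra. }
specialize (Hd t Hball ltac:(lra)).
unfold ball in Hd; simpl in Hd; unfold AbsRing_ball, abs, minus, plus, opp in Hd; simpl in Hd.
apply Rabs_lt_between in Hd. lra.
Qed.

Lemma left_closed (g : R -> R) l x1 x0 c : is_derive g x0 l -> x1 < x0 ->
  (forall t, x1 <= t < x0 -> c <= g t) -> c <= g x0.
Proof.
intros Hd H1 Hc. destruct (Rle_lt_dec c (g x0)) as [|Hlt]; auto. exfalso.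
destruct (cont_eps g x0 l Hd (c - g x0)) as [d [Hd0 Hdd]]; [lra|].
pose proof (Rmax_l x1 (x0 - d/2)). pose proof (Rmax_r x1 (x0 - d/2)).
assert (Rmax x1 (x0 - d/2) < x0) by (apply Rmax_lub_lt; lra).
set (t := Rmax x1 (x0 - d/2)) in *.
assert (Hta : Rabs (t - x0) < d) by (rewrite Rabs_left by lra; lra).
specialize (Hdd t Hta). specialize (Hc t ltac:(lra)).
apply Rabs_lt_between in Hdd. lra.
Qed.
Lemma sq_nonneg (x : R) : 0 <= x*x.
Proof. pose proof (Rle_0_sqr x). unfold Rsqr in H. exact H. Qed.
Lemma amgm3 (x y : R) : 0 < x -> 0 < y -> x*x*y + x*y*y + 1 - 3*x*y >= 0.
Proof.
intros. set (r := sqrt (x*y)).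
assert (Hr : r*r = x*y) by (apply sqrt_sqrt; nra).
assert (Hr0 : 0 <= r) by apply sqrt_pos. clearbody r.
assert (Hxy : 2*r <= x+y). { destruct (Rle_lt_dec (2*r) (x+y)); auto. pose proof (sq_nonneg (x-y)). assert ((x+y)*(x+y) < (2*r)*(2*r)) by (apply Rmult_le_0_lt_compat; lra). nra. }
assert (0 <= (r-1)*(r-1)*(2*r+1)) by (apply Rmult_le_pos; [apply sq_nonneg | lra]).
assert (x*y*(x+y) >= x*y*(2*r)) by (apply Rle_ge, Rmult_le_compat_l; nra).
replace (x*x*y + x*y*y + 1 - 3*x*y) with (x*y*(x+y) + 1 - 3*(x*y)) by ring.
rewrite <- Hr in *. nra.
Qed.
Lemma amgm3' (x y z : R) : 0 < x -> 0 < y -> x*y*z = 1 -> x + y + z >= 3.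
Proof.
intros Hx Hy Hz. pose proof (amgm3 x y Hx Hy).
assert (z = /(x*y)) by (field_simplify_eq; [lra| nra]). subst z.
assert (0 < x*y) by nra.
apply Rle_ge. apply (Rmult_le_reg_r (x*y)); auto.
replace ((x + y + / (x * y)) * (x * y)) with (x*x*y + x*y*y + 1) by (field; lra). lra.
Qed.

Lemma lyap_ineq a b Ss Is Es sg s e i :
  0 < a -> 0 < b -> 0 < Ss -> 0 < Is -> 0 < Es -> 0 < sg -> 0 < s -> 0 < e -> 0 < i ->
  (1 - Ss/s)*(a*Ss*Is + b*Ss - a*s*i - b*s) + (1 - Es/e)*(a*s*i - (a*Ss*Is/Es)*e)
  + (a*Ss*Is/(Es*sg))*(1 - Is/i)*(sg*e - (sg*Es/Is)*i) <= -b*((s-Ss)*(s-Ss))/s.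
Proof.
intros.
pose proof (amgm3' (Ss/s) (s*i*Es/(Ss*Is*e)) (e*Is/(Es*i))) as H'.
assert (Hid : (1 - Ss/s)*(a*Ss*Is + b*Ss - a*s*i - b*s) + (1 - Es/e)*(a*s*i - (a*Ss*Is/Es)*e)
  + (a*Ss*Is/(Es*sg))*(1 - Is/i)*(sg*e - (sg*Es/Is)*i) =
  -b*((s-Ss)*(s-Ss))/s + a*Ss*Is*(3 - (Ss/s + s*i*Es/(Ss*Is*e) + e*Is/(Es*i)))) by (field; lra).
rewrite Hid.
assert (Ss/s + s*i*Es/(Ss*Is*e) + e*Is/(Es*i) >= 3).
{ apply H'.
  - apply Rdiv_lt_0_compat; lra.
  - apply Rdiv_lt_0_compat; repeat apply Rmult_lt_0_compat; lra.
  - field. repeat split; lra. }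
assert (0 < a*Ss*Is) by (repeat apply Rmult_lt_0_compat; lra). nra.
Qed.

Lemma positivity (S E I : R -> R) a b k1 k2 sg c0 :
  0 < a -> 0 < sg -> 0 < c0 ->
  (forall t, 0 < t -> is_derive S t (c0 - a * S t * I t - b * S t)) ->
  (forall t, 0 < t -> is_derive E t (a * S t * I t - k1 * E t)) ->
  (forall t, 0 < t -> is_derive I t (sg * E t - k2 * I t)) ->
  filterlim S (at_right 0) (locally (S 0)) ->
  filterlim E (at_right 0) (locally (E 0)) ->
  filterlim I (at_right 0) (locally (I 0)) ->
  0 < S 0 -> 0 < E 0 -> 0 < I 0 ->
  forall t, 0 <= t -> 0 < S t /\ 0 < E t /\ 0 < I t.
Proof.
intros Ha Hsg Hc0 HdS HdE HdI HcS HcE HcI HS0 HE0 HI0.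
set (pos := fun s => 0 < S s /\ 0 < E s /\ 0 < I s).
change (forall t, 0 <= t -> pos t).
apply NNPP. intro Hn. apply not_all_ex_not in Hn. destruct Hn as [t0 Ht0].
apply imply_to_and in Ht0. destruct Ht0 as [Ht0 Hnp].
set (A := fun T => 0 <= T /\ forall s, 0 <= s <= T -> pos s).
assert (HA0 : A 0).
{ split; [lra|]. intros s Hs. replace s with 0 by lra. unfold pos; auto. }
assert (Hbd : bound A).
{ exists t0. intros T [HT HP]. destruct (Rle_lt_dec T t0); auto.
  exfalso. apply Hnp. apply HP. lra. }
destruct (completeness A Hbd (ex_intro _ 0 HA0)) as [Ts [Hub Hlub]].
assert (Hbelow : forall s, 0 <= s < Ts -> pos s).
{ intros s Hs. apply NNPP. intro Hns.
  assert (is_upper_bound A s).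
  { intros T [HT HP]. destruct (Rle_lt_dec T s); auto. exfalso. apply Hns. apply HP. lra. }
  specialize (Hlub s H). lra. }
assert (HTs : 0 < Ts).
{ destruct (rc_pos S HcS HS0) as [d1 [Hd1 H1]].
  destruct (rc_pos E HcE HE0) as [d2 [Hd2 H2]].
  destruct (rc_pos I HcI HI0) as [d3 [Hd3 H3]].
  set (d := Rmin d1 (Rmin d2 d3)).
  assert (0 < d) by (unfold d; repeat apply Rmin_pos; auto).
  assert (d <= d1) by apply Rmin_l.
  assert (d <= d2) by (unfold d; eapply Rle_trans; [apply Rmin_r| apply Rmin_l]).
  assert (d <= d3) by (unfold d; eapply Rle_trans; [apply Rmin_r| apply Rmin_r]).
  assert (HAd : A (d/2)).
  { split; [lra|]. intros s Hs. destruct (Req_dec s 0) as [->|Hs0]; [unfold pos; auto|].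
    unfold pos; repeat split; [apply H1|apply H2|apply H3]; lra. }
  specialize (Hub _ HAd). lra. }
set (t1 := Ts / 2).
assert (Ht1 : 0 < t1 < Ts) by (unfold t1; lra).
assert (HETs : 0 < E Ts).
{ set (g := fun t => E t * exp (k1 * t)).
  assert (Hg : forall t, 0 < t -> is_derive g t (a * S t * I t * exp (k1 * t))).
  { intros t Ht. unfold g. pose proof (HdE t Ht) as Hd. auto_derive. { exists (a * S t * I t - k1 * E t); auto. }
    change (fun x0 => E x0) with E. rewrite (is_derive_unique _ _ _ Hd). ring. }
  assert (Hmon : forall t, t1 <= t < Ts -> g t1 <= g t).
  { intros t Ht. assert (- g t <= - g t1); [|lra].
    apply (nonincr (fun t => - g t) (fun t => - (a * S t * I t * exp (k1 * t))) 0 Ts); try lra.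
    - intros u Hu. apply (is_derive_opp g). apply Hg. lra.
    - intros u Hu. destruct (Hbelow u ltac:(lra)) as [Hs [He Hi]].
      pose proof (exp_pos (k1*u)). assert (0 < a * S u * I u) by (repeat apply Rmult_lt_0_compat; auto). nra. }
  assert (Hgt1 : 0 < g t1).
  { unfold g. destruct (Hbelow t1 ltac:(lra)) as [Hs [He Hi]]. pose proof (exp_pos (k1*t1)). nra. }
  assert (Hgg : g t1 <= g Ts) by (apply (left_closed g (a * S Ts * I Ts * exp (k1 * Ts)) t1 Ts); [apply Hg; lra | lra | intros; apply Hmon; lra]).
  unfold g in Hgg, Hgt1. pose proof (exp_pos (k1*Ts)).
  destruct (Rlt_le_dec 0 (E Ts)); auto. nra. }
assert (HITs : 0 < I Ts).
{ set (g := fun t => I t * exp (k2 * t)).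
  assert (Hg : forall t, 0 < t -> is_derive g t (sg * E t * exp (k2 * t))).
  { intros t Ht. unfold g. pose proof (HdI t Ht) as Hd. auto_derive. { exists (sg * E t - k2 * I t); auto. }
    change (fun x0 => I x0) with I. rewrite (is_derive_unique _ _ _ Hd). ring. }
  assert (Hmon : forall t, t1 <= t < Ts -> g t1 <= g t).
  { intros t Ht. assert (- g t <= - g t1); [|lra].
    apply (nonincr (fun t => - g t) (fun t => - (sg * E t * exp (k2 * t))) 0 Ts); try lra.
    - intros u Hu. apply (is_derive_opp g). apply Hg. lra.
    - intros u Hu. destruct (Hbelow u ltac:(lra)) as [Hs [He Hi]].
      pose proof (exp_pos (k2*u)). assert (0 < sg * E u) by (repeat apply Rmult_lt_0_compat; auto). nra. }
  assert (Hgt1 : 0 < g t1).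
  { unfold g. destruct (Hbelow t1 ltac:(lra)) as [Hs [He Hi]]. pose proof (exp_pos (k2*t1)). nra. }
  assert (Hgg : g t1 <= g Ts) by (apply (left_closed g (sg * E Ts * exp (k2 * Ts)) t1 Ts); [apply Hg; lra | lra | intros; apply Hmon; lra]).
  unfold g in Hgg, Hgt1. pose proof (exp_pos (k2*Ts)).
  destruct (Rlt_le_dec 0 (I Ts)); auto. nra. }
assert (HSTs : 0 < S Ts).
{ assert (HS0' : 0 <= S Ts).
  { apply (left_closed S (c0 - a * S Ts * I Ts - b * S Ts) t1 Ts); [apply HdS; lra | lra |].
    intros t Ht. destruct (Hbelow t ltac:(lra)) as [Hs _]. lra. }
  destruct (Req_dec (S Ts) 0) as [HSz|]; [|lra]. exfalso.
  destruct (deriv_eps S Ts _ (HdS Ts HTs) (c0/2)) as [d [Hd Hh]]; [lra|].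
  set (h := - Rmin (d/2) (Ts/2)).
  assert (Rmin (d/2) (Ts/2) <= d/2) by apply Rmin_l.
  assert (Rmin (d/2) (Ts/2) <= Ts/2) by apply Rmin_r.
  assert (0 < Rmin (d/2) (Ts/2)) by (apply Rmin_pos; lra).
  assert (Hh0 : h <> 0) by (unfold h; lra).
  assert (Hhd : Rabs h < d) by (unfold h; rewrite Rabs_Ropp, Rabs_right; lra).
  specialize (Hh h Hh0 Hhd). rewrite HSz in Hh.
  replace (c0 - a * 0 * I Ts - b * 0) with c0 in Hh by ring.
  apply Rabs_lt_between in Hh.
  destruct (Hbelow (Ts + h) ltac:(unfold h; lra)) as [Hp _].
  assert ((S (Ts + h) - 0) / h < 0).
  { unfold Rdiv. replace (S (Ts+h) - 0) with (S (Ts+h)) by ring.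
    assert (/ h < 0) by (apply Rinv_lt_0_compat; unfold h; lra). nra. }
  lra. }
destruct (cont_eps S Ts _ (HdS Ts HTs) (S Ts) HSTs) as [d1 [Hd1 H1]].
destruct (cont_eps E Ts _ (HdE Ts HTs) (E Ts) HETs) as [d2 [Hd2 H2]].
destruct (cont_eps I Ts _ (HdI Ts HTs) (I Ts) HITs) as [d3 [Hd3 H3]].
set (d := Rmin d1 (Rmin d2 d3)).
assert (0 < d) by (unfold d; repeat apply Rmin_pos; auto).
assert (d <= d1) by apply Rmin_l.
assert (d <= d2) by (unfold d; eapply Rle_trans; [apply Rmin_r| apply Rmin_l]).
assert (d <= d3) by (unfold d; eapply Rle_trans; [apply Rmin_r| apply Rmin_r]).
assert (HAd : A (Ts + d/2)).
{ split; [lra|]. intros s Hs. destruct (Rlt_le_dec s Ts). { apply Hbelow; lra. }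
  assert (Hsd : Rabs (s - Ts) < d) by (rewrite Rabs_right; lra).
  unfold pos. repeat split.
  - specialize (H1 s ltac:(lra)). apply Rabs_lt_between in H1. lra.
  - specialize (H2 s ltac:(lra)). apply Rabs_lt_between in H2. lra.
  - specialize (H3 s ltac:(lra)). apply Rabs_lt_between in H3. lra. }
specialize (Hub _ HAd). lra.
Qed.

Lemma eps_to_lim (f : R -> R) (l : R) :
  (forall eps, 0 < eps -> exists T, forall t, T < t -> Rabs (f t - l) < eps) ->
  is_lim f p_infty l.
Proof.
intros H. apply is_lim_spec. intros eps. destruct (H eps (cond_pos eps)) as [T HT].
exists T. auto.
Qed.
Lemma lim_to_eps (f : R -> R) (l : R) : is_lim f p_infty l ->
  forall eps, 0 < eps -> exists T, forall t, T < t -> Rabs (f t - l) < eps.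
Proof.
intros H eps He. apply is_lim_spec in H. destruct (H (mkposreal eps He)) as [T HT].
exists T. auto.
Qed.
Lemma ab_add x y X Y : Rabs x <= X -> Rabs y <= Y -> Rabs (x + y) <= X + Y.
Proof. intros. pose proof (Rabs_triang x y). lra. Qed.
Lemma ab_sub x y X Y : Rabs x <= X -> Rabs y <= Y -> Rabs (x - y) <= X + Y.
Proof. intros. pose proof (Rabs_triang x (-y)). rewrite Rabs_Ropp in H1. unfold Rminus. lra. Qed.
Lemma ab_mul x y X Y : Rabs x <= X -> Rabs y <= Y -> Rabs (x * y) <= X * Y.
Proof. intros. rewrite Rabs_mult. apply Rmult_le_compat; auto; apply Rabs_pos. Qed.
Lemma ab_opp x X : Rabs x <= X -> Rabs (- x) <= X.
Proof. rewrite Rabs_Ropp; auto. Qed.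
Lemma sq_lt_abs x e : 0 < e -> x * x < e * e -> Rabs x < e.
Proof. intros. destruct (Rcase_abs x); [rewrite Rabs_left|rewrite Rabs_right]; nra. Qed.
Lemma xlnx c x : 0 < c -> 0 < x -> c - c * ln c <= x - c * ln x.
Proof.
intros Hc Hx. pose proof (exp_ineq1_le (ln (x / c))).
rewrite exp_ln in H by (apply Rdiv_lt_0_compat; auto).
rewrite ln_div in H by auto.
assert (c * (1 + (ln x - ln c)) <= c * (x / c)) by (apply Rmult_le_compat_l; lra).
replace (c * (x / c)) with x in H0 by (field; lra). nra.
Qed.
Lemma lt_of_div x D : 0 < D -> 1 < x / D -> D < x.
Proof.
intros HD H. replace x with (x / D * D) by (field; lra). nra.
Qed.


Lemma lim_scal (f : R -> R) (c l : R) : is_lim f p_infty l -> is_lim (fun t => c * f t) p_infty (c * l).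
Proof. intros H. apply (is_lim_scal_l f c p_infty l H). Qed.
Lemma lim_div (f g : R -> R) (lf lg : R) : is_lim f p_infty lf -> is_lim g p_infty lg -> lg <> 0 ->
  is_lim (fun t => f t / g t) p_infty (lf / lg).
Proof.
intros Hf Hg H0.
apply (is_lim_div f g p_infty lf lg Hf Hg).
- intro Hc. injection Hc. auto.
- simpl. auto.
Qed.
Lemma lim_ext_pos (f g : R -> R) l : (forall t, 0 < t -> f t = g t) -> is_lim f p_infty l -> is_lim g p_infty l.
Proof.
intros He H. apply (is_lim_ext_loc f g). exists 0. auto. auto.
Qed.

Ltac leafM := match goal with H : forall t, 1 < t -> Rabs (?f t) <= _ |- Rabs (?f ?t) <= _ => solve [apply H; lra] end.
Ltac bnd := repeat (first [ eapply ab_add | eapply ab_sub | eapply ab_mul | eapply ab_opp | leafM | apply Rle_refl ]).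
Ltac exd := repeat split; try match goal with
  | H : forall t, 0 < t -> ex_derive ?f t |- ex_derive (fun x => ?f x) _ => apply H; lra
  | H : forall t, 0 < t -> ex_derive ?f t |- ex_derive ?f _ => apply H; lra end; try assumption.

Theorem mainTheorem13 (N mu beta sigma gamma p rho : R)
  (S E I Rr V : R -> R) :
  0 < N -> 0 < mu -> 0 < beta -> 0 < sigma -> 0 < gamma -> 0 < p ->
  0 < rho -> rho < 1 ->
  repro_number N mu beta sigma gamma p rho > 1 ->
  is_solution N mu beta sigma gamma p rho S E I Rr V ->
  in_Sigma N (S 0) (E 0) (I 0) (Rr 0) (V 0) ->
  in_int_Omega N (S 0) (E 0) (I 0) ->
  is_lim S p_infty (Se N mu beta sigma gamma rho) /\
  is_lim E p_infty (Ee N mu beta sigma gamma p rho) /\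
  is_lim I p_infty (Ie N mu beta sigma gamma p rho) /\
  is_lim Rr p_infty (Req N mu beta sigma gamma p rho) /\
  is_lim V p_infty (Ve N mu beta sigma gamma p rho).
Proof.
intros HN Hmu Hbeta Hsig Hgam Hp Hrho0 Hrho1 HR0 Hsol HSig HOm.
destruct Hsol as [Hd [HcS [HcE [HcI [HcR HcV]]]]].
destruct HOm as [HS0 [HE0 [HI0 _]]].
unfold Req, Ve, Ee.
unfold repro_number in HR0.
assert (HIs : 0 < Ie N mu beta sigma gamma p rho).
{ unfold Ie. apply Rdiv_lt_0_compat.
  - apply lt_of_div in HR0; [lra|]. repeat apply Rmult_lt_0_compat; nra.
  - repeat apply Rmult_lt_0_compat; lra. }
assert (HSs : 0 < Se N mu beta sigma gamma rho).
{ unfold Se. apply Rdiv_lt_0_compat; repeat apply Rmult_lt_0_compat; lra. }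
set (a := beta / N * (1 - rho)).
set (b := p / N + mu).
set (c0 := mu * N).
set (k1 := sigma + mu).
set (k2 := gamma + mu).
assert (Ha : 0 < a) by (unfold a; apply Rmult_lt_0_compat; [apply Rdiv_lt_0_compat|]; lra).
assert (Hb : 0 < b) by (unfold b; assert (0 < p/N) by (apply Rdiv_lt_0_compat; lra); lra).
assert (Hc0pos : 0 < c0) by (unfold c0; nra).
assert (Hk1pos : 0 < k1) by (unfold k1; lra).
assert (Hk2pos : 0 < k2) by (unfold k2; lra).
assert (Hc0 : c0 = a * Se N mu beta sigma gamma rho * Ie N mu beta sigma gamma p rho + b * Se N mu beta sigma gamma rho).
{ unfold c0, a, b, Se, Ie. field. repeat split; lra. }
set (Ss := Se N mu beta sigma gamma rho) in *.
set (Is := Ie N mu beta sigma gamma p rho) in *.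
set (Es := k2 / sigma * Is).
assert (HEs : 0 < Es) by (unfold Es; apply Rmult_lt_0_compat; [apply Rdiv_lt_0_compat|]; lra).
assert (Hk1 : k1 = a * Ss * Is / Es).
{ unfold Es, Ss, Se, a, k1, k2. field. repeat split; lra. }
assert (Hk2 : k2 = sigma * Es / Is) by (unfold Es; field; lra).
assert (HdS : forall t, 0 < t -> is_derive S t (c0 - a * S t * I t - b * S t)).
{ intros t Ht. destruct (Hd t Ht) as [H _].
  replace (c0 - a * S t * I t - b * S t) with (mu * N - beta / N * S t * (1 - rho) * I t - p / N * S t - mu * S t) by (unfold c0, a, b; ring). exact H. }
assert (HdE : forall t, 0 < t -> is_derive E t (a * S t * I t - k1 * E t)).
{ intros t Ht. destruct (Hd t Ht) as [_ [H _]].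
  replace (a * S t * I t - k1 * E t) with (beta / N * S t * (1 - rho) * I t - (sigma + mu) * E t) by (unfold a, k1; ring). exact H. }
assert (HdI : forall t, 0 < t -> is_derive I t (sigma * E t - k2 * I t)).
{ intros t Ht. destruct (Hd t Ht) as [_ [_ [H _]]]. exact H. }
assert (HdR : forall t, 0 < t -> is_derive Rr t (gamma * I t - mu * Rr t)).
{ intros t Ht. destruct (Hd t Ht) as [_ [_ [_ [H _]]]]. exact H. }
assert (HdV : forall t, 0 < t -> is_derive V t (p / N * S t - mu * V t)).
{ intros t Ht. destruct (Hd t Ht) as [_ [_ [_ [_ H]]]]. exact H. }
clear Hd.
assert (HxS : forall t, 0 < t -> ex_derive S t) by (intros; eexists; apply HdS; auto).
assert (HxE : forall t, 0 < t -> ex_derive E t) by (intros; eexists; apply HdE; auto).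
assert (HxI : forall t, 0 < t -> ex_derive I t) by (intros; eexists; apply HdI; auto).
pose proof (positivity S E I a b k1 k2 sigma c0 Ha Hsig Hc0pos HdS HdE HdI HcS HcE HcI HS0 HE0 HI0) as Hpos.
set (z := fun t => (S t + E t + I t - N) * exp (mu * t)).
assert (Hz : forall t, 0 < t -> is_derive z t ((- (p / N) * S t - gamma * I t) * exp (mu * t))).
{ intros t Ht. unfold z. auto_derive.
  { repeat split; [exists (c0 - a * S t * I t - b * S t); auto | exists (a * S t * I t - k1 * E t); auto | exists (sigma * E t - k2 * I t); auto]. }
  change (fun x => S x) with S. change (fun x => E x) with E. change (fun x => I x) with I.
  rewrite (is_derive_unique _ _ _ (HdS t Ht)), (is_derive_unique _ _ _ (HdE t Ht)), (is_derive_unique _ _ _ (HdI t Ht)).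
  unfold c0, a, b, k1, k2. field. lra. }
assert (Hzm : forall t, 1 <= t -> z t <= z 1).
{ intros t Ht. apply (nonincr z (fun t => (- (p / N) * S t - gamma * I t) * exp (mu * t)) 0 (t+1)); try lra.
  - intros u Hu. apply Hz. lra.
  - intros u Hu. destruct (Hpos u ltac:(lra)) as [Hs [He Hi]].
    pose proof (exp_pos (mu*u)). assert (0 < p / N) by (apply Rdiv_lt_0_compat; lra).
    assert (0 < p / N * S u + gamma * I u) by nra. nra. }
set (M := N + Rabs (z 1)).
assert (HM : 0 < M) by (unfold M; pose proof (Rabs_pos (z 1)); lra).
assert (HW : forall t, 1 <= t -> S t + E t + I t <= M).
{ intros t Ht. pose proof (Hzm t Ht) as Hzt. pose proof (Rle_abs (z 1)).
  assert (Hex : 1 <= exp (mu * t)) by (pose proof (exp_ineq1_le (mu*t)); nra).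
  assert (Hw : S t + E t + I t - N = z t / exp (mu * t)) by (unfold z; field; lra).
  assert (z t / exp (mu * t) <= Rabs (z 1)).
  { destruct (Rle_lt_dec (z t) 0).
    - assert (z t / exp (mu*t) <= 0). { unfold Rdiv. assert (0 < / exp (mu*t)) by (apply Rinv_0_lt_compat; lra). nra. }
      pose proof (Rabs_pos (z 1)). lra.
    - assert (z t / exp (mu * t) <= z t).
      { apply (Rmult_le_reg_r (exp (mu*t))); [lra|]. unfold Rdiv. rewrite Rmult_assoc, Rinv_l, Rmult_1_r by lra. nra. }
      lra. }
  unfold M. lra. }
assert (HSM : forall t, 1 < t -> Rabs (S t) <= M).
{ intros t Ht. destruct (Hpos t ltac:(lra)) as [Hs [He Hi]]. pose proof (HW t ltac:(lra)). rewrite Rabs_right; lra. }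
assert (HEM : forall t, 1 < t -> Rabs (E t) <= M).
{ intros t Ht. destruct (Hpos t ltac:(lra)) as [Hs [He Hi]]. pose proof (HW t ltac:(lra)). rewrite Rabs_right; lra. }
assert (HIM : forall t, 1 < t -> Rabs (I t) <= M).
{ intros t Ht. destruct (Hpos t ltac:(lra)) as [Hs [He Hi]]. pose proof (HW t ltac:(lra)). rewrite Rabs_right; lra. }
set (Lf := fun t => S t - Ss * ln (S t) + (E t - Es * ln (E t)) + k1 / sigma * (I t - Is * ln (I t))).
set (dL := fun t => (1 - Ss / S t) * (a * Ss * Is + b * Ss - a * S t * I t - b * S t)
   + (1 - Es / E t) * (a * S t * I t - (a * Ss * Is / Es) * E t)
   + (a * Ss * Is / (Es * sigma)) * (1 - Is / I t) * (sigma * E t - (sigma * Es / Is) * I t)).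
assert (HdL : forall t, 1 < t -> is_derive Lf t (dL t)).
{ intros t Ht. destruct (Hpos t ltac:(lra)) as [Hs [He Hi]]. unfold Lf. auto_derive.
  { exd. }
  change (fun x => S x) with S. change (fun x => E x) with E. change (fun x => I x) with I.
  rewrite (is_derive_unique _ _ _ (HdS t ltac:(lra))), (is_derive_unique _ _ _ (HdE t ltac:(lra))), (is_derive_unique _ _ _ (HdI t ltac:(lra))).
  unfold dL. rewrite Hc0, Hk2, Hk1. field. repeat split; lra. }
set (h := fun t => b / M * ((S t - Ss) * (S t - Ss))).
assert (HL : forall t, 1 < t -> dL t <= - h t).
{ intros t Ht. destruct (Hpos t ltac:(lra)) as [Hs [He Hi]].
  pose proof (lyap_ineq a b Ss Is Es sigma (S t) (E t) (I t) Ha Hb HSs HIs HEs Hsig Hs He Hi) as Hly.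
  fold (dL t) in Hly. unfold h.
  assert (HSt : S t <= M) by (pose proof (HSM t Ht); apply Rabs_le_between in H; lra).
  assert (Hinv : / M <= / S t) by (apply Rinv_le_contravar; lra).
  pose proof (sq_nonneg (S t - Ss)) as Hq.
  assert (b * ((S t - Ss) * (S t - Ss)) * / M <= b * ((S t - Ss) * (S t - Ss)) * / S t).
  { apply Rmult_le_compat_l; auto. apply Rmult_le_pos; lra. }
  unfold Rdiv in *. lra. }
set (B := (Ss - Ss * ln Ss) + (Es - Es * ln Es) + k1 / sigma * (Is - Is * ln Is)).
assert (HB : forall t, 1 < t -> B <= Lf t).
{ intros t Ht. destruct (Hpos t ltac:(lra)) as [Hs [He Hi]].
  pose proof (xlnx Ss (S t) HSs Hs). pose proof (xlnx Es (E t) HEs He). pose proof (xlnx Is (I t) HIs Hi).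
  assert (0 < k1 / sigma) by (apply Rdiv_lt_0_compat; lra).
  unfold B, Lf. apply Rplus_le_compat; [lra|]. apply Rmult_le_compat_l; lra. }
assert (Hh0 : forall t, 1 < t -> 0 <= h t).
{ intros t Ht. unfold h. apply Rmult_le_pos; [apply Rlt_le, Rdiv_lt_0_compat; lra | apply sq_nonneg]. }
set (dSf := fun t => c0 - a * S t * I t - b * S t).
set (dEf := fun t => a * S t * I t - k1 * E t).
set (dIf := fun t => sigma * E t - k2 * I t).
assert (HSMd : forall t, 1 < t -> Rabs (dSf t) <= Rabs c0 + Rabs a * M * M + Rabs b * M).
{ intros t Ht. unfold dSf. bnd. }
set (dh := fun t => b / M * (2 * (S t - Ss) * dSf t)).
assert (Hdh : forall t, 1 < t -> is_derive h t (dh t)).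
{ intros t Ht. unfold h, dh, dSf. auto_derive.
  { exd. }
  change (fun x => S x) with S. rewrite (is_derive_unique _ _ _ (HdS t ltac:(lra))). ring. }
assert (Hhc : forall eps, 0 < eps -> exists T, forall t, T < t -> h t < eps).
{ eapply (barbalat1 Lf dL h dh 1 _ B); auto.
  intros t Ht. unfold dh. bnd. }
assert (HSc : forall eps, 0 < eps -> exists T, forall t, T < t -> Rabs (S t - Ss) < eps).
{ intros eps He. destruct (Hhc (b / M * (eps * eps))) as [T HT].
  { apply Rmult_lt_0_compat; [apply Rdiv_lt_0_compat|]; nra. }
  exists T. intros t Ht. specialize (HT t Ht). unfold h in HT.
  apply sq_lt_abs; auto. apply Rmult_lt_reg_l in HT; auto. apply Rdiv_lt_0_compat; lra. }
assert (HdSc : forall eps, 0 < eps -> exists T, forall t, T < t -> Rabs (dSf t) < eps).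
{ eapply (barbalat2 S dSf (fun t => - a * (dSf t * I t + S t * dIf t) - b * dSf t) 1 _ Ss); auto.
  - intros t Ht. apply HdS. lra.
  - intros t Ht. unfold dSf, dIf. auto_derive. { exd. }
    change (fun x => S x) with S. change (fun x => I x) with I.
    rewrite (is_derive_unique _ _ _ (HdS t ltac:(lra))), (is_derive_unique _ _ _ (HdI t ltac:(lra))). ring.
  - intros t Ht. unfold dSf, dIf. bnd. }
assert (HlimS : is_lim S p_infty Ss) by (apply eps_to_lim; auto).
assert (HlimdS : is_lim dSf p_infty 0).
{ apply eps_to_lim. intros eps He. destruct (HdSc eps He) as [T HT]. exists T. intros t Ht.
  rewrite Rminus_0_r. auto. }
assert (HlimI : is_lim I p_infty Is).
{ assert (Hq : is_lim (fun t => (c0 - b * S t - dSf t) / (a * S t)) p_infty ((c0 - b * Ss - 0) / (a * Ss))).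
  { apply lim_div.
    - apply is_lim_minus'; auto. apply is_lim_minus'. apply is_lim_const. apply lim_scal; auto.
    - apply lim_scal; auto.
    - nra. }
  replace Is with ((c0 - b * Ss - 0) / (a * Ss)) by (rewrite Hc0; field; lra).
  apply (lim_ext_pos _ _ _ ) with (2 := Hq). intros t Ht.
  destruct (Hpos t ltac:(lra)) as [Hs _]. unfold dSf. field. lra. }
assert (HdIc : forall eps, 0 < eps -> exists T, forall t, T < t -> Rabs (dIf t) < eps).
{ eapply (barbalat2 I dIf (fun t => sigma * dEf t - k2 * dIf t) 1 _ Is); auto.
  - intros t Ht. apply HdI. lra.
  - intros t Ht. unfold dEf, dIf. auto_derive. { exd. }
    change (fun x => E x) with E. change (fun x => I x) with I.
    rewrite (is_derive_unique _ _ _ (HdE t ltac:(lra))), (is_derive_unique _ _ _ (HdI t ltac:(lra))). ring.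
  - intros t Ht. unfold dEf, dIf. bnd.
  - apply lim_to_eps; auto. }
assert (HlimdI : is_lim dIf p_infty 0).
{ apply eps_to_lim. intros eps He. destruct (HdIc eps He) as [T HT]. exists T. intros t Ht.
  rewrite Rminus_0_r. auto. }
assert (HlimE : is_lim E p_infty Es).
{ assert (Hq : is_lim (fun t => (dIf t + k2 * I t) / sigma) p_infty ((0 + k2 * Is) / sigma)).
  { apply lim_div. apply is_lim_plus'; auto. apply lim_scal; auto. apply is_lim_const. lra. }
  replace Es with ((0 + k2 * Is) / sigma) by (unfold Es; field; lra).
  apply (lim_ext_pos _ _ _ ) with (2 := Hq). intros t Ht. unfold dIf. field. lra. }
split; [exact HlimS|]. split; [exact HlimE|]. split; [exact HlimI|]. split.
- apply eps_to_lim. replace (gamma / mu * Is) with (gamma * Is / mu) by (field; lra).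
  apply (lin_conv Rr (fun t => gamma * I t) mu (gamma * Is)); auto.
  apply lim_to_eps. apply lim_scal. auto.
- apply eps_to_lim. replace (p / c0 * Ss) with (p / N * Ss / mu) by (unfold c0; field; lra).
  apply (lin_conv V (fun t => p / N * S t) mu (p / N * Ss)); auto.
  apply lim_to_eps. apply lim_scal. auto.
Qed.
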